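(* For all $n\ge2$, each of the four sets $S_n(I,J)$, $S_n(K,J)$, $S_n(J,I)$, $S_n(J,K)$ is mapped into itself by $T_3$.
   Context: A twisted $n$-gon is a map $P:\mathbb{Z}\to\mathbb{RP}^2$ with every three consecutive points non-collinear and $P_{i+n}=M(P_i)$ for a fixed $M\in\mathrm{PGL}_3(\mathbb{R})$; $\mathcal{P}_n$ is the set of classes modulo projective equivalence. $P$ is $3$-nice if $P_i,P_{i+1},P_{i+3},P_{i+4}$ are in general position for all $i$. $T_3(P)=P'$ with $P'_i=P_iP_{i+3}\cap P_{i+1}P_{i+4}$ (lines through the indicated points); it acts on classes of $3$-nice twisted $n$-gons. Inverse cross ratio: for four collinear points $A,B,C,D$, map their line projectively to the $x$-axis with coordinates $a,b,c,d$ and set $\chi(A,B,C,D)=\frac{(a-b)(c-d)}{(a-c)(b-d)}$ (value in $\mathbb{R}\cup\{\infty\}$, projectively invariant). Corner invariants: $x_{2i}=\chi(P_{i-2},P_{i-1},P_{i-2}P_{i-1}\cap P_iP_{i+1},P_{i-2}P_{i-1}\cap P_{i+1}P_{i+2})$ and $x_{2i+1}=\chi(P_{i+2},P_{i+1},P_{i+2}P_{i+1}\cap P_iP_{i-1},P_{i+2}P_{i+1}\cap P_{i-1}P_{i-2})$, with $x_{j+2n}=x_j$. Let $I=(-\infty,0)$, $J=(0,1)$, $K=(1,\infty)$. $S_n(I,J)$ is the set of $[P]\in\mathcal{P}_n$ whose corner invariants satisfy $(x_{2i},x_{2i+1})\in I\times J$ for all $i$; $S_n(K,J)$, $S_n(J,I)$,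 $S_n(J,K)$ are defined in the same way with $K\times J$, $J\times I$, $J\times K$. (Elements of these sets are automatically $3$-nice.) *)

(* Defs.v *)
From HB Require Import structures.
From mathcomp Require Import all_boot all_order all_algebra.
From mathcomp Require Import reals.
Set Implicit Arguments. Unset Strict Implicit. Unset Printing Implicit Defensive.
Import Order.TTheory GRing.Theory Num.Theory.
Local Open Scope ring_scope.

Section Defs.
Variable R : realType.

(* Points of RP^2 (and lines of the dual plane) are represented by homogeneous
   coordinate row vectors in R^3; a genuine point is a nonzero vector. *)
Notation vec := 'rV[R]_3.

Definition c0 : 'I_3 := @Ordinal 3 0 isT.
Definition c1 : 'I_3 := @Ordinal 3 1 isT.
Definition c2 : 'I_3 := @Ordinal 3 2 isT.

Definition cross (u v : vec) : vec :=
  \row_(k < 3) [:: u 0 c1 * v 0 c2 - u 0 c2 * v 0 c1;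
                   u 0 c2 * v 0 c0 - u 0 c0 * v 0 c2;
                   u 0 c0 * v 0 c1 - u 0 c1 * v 0 c0]`_k.

Definition dot (u v : vec) : R := \sum_(k < 3) u 0 k * v 0 k.

Definition line (X Y : vec) : vec := cross X Y.
Definition meet (L1 L2 : vec) : vec := cross L1 L2.

Definition det3 (u v w : vec) : R :=
  \det (\matrix_(i < 3, j < 3) [:: u 0 j; v 0 j; w 0 j]`_i).

Definition noncollinear (u v w : vec) : Prop := det3 u v w != 0.

(* Inverse cross ratio chi(A,B,C,D) = (a-b)(c-d)/((a-c)(b-d)) of four
   collinear points.  In homogeneous coordinates on the line, (a - b) is
   [A,B]/(t_A t_B) with [A,B] the 2x2 bracket, so chi = [A,B][C,D]/([A,C][B,D]);
   for collinear A,B,C,D one has cross X Y = [X,Y] n for a fixed normal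
   vector n, hence chi = <AxB, CxD> / <AxC, BxD>.  We record it as a
   numerator/denominator pair (a point of R u {oo}). *)
Definition chi_num (A B C D : vec) : R := dot (cross A B) (cross C D).
Definition chi_den (A B C D : vec) : R := dot (cross A C) (cross B D).

Definition chi_in (X : interval R) (A B C D : vec) : Prop :=
  chi_den A B C D != 0 /\ chi_num A B C D / chi_den A B C D \in X.

Definition twisted_ngon (n : nat) (M : 'M[R]_3) (P : int -> vec) : Prop :=
  M \in unitmx /\
  (forall i : int, noncollinear (P i) (P (i + 1)) (P (i + 2))) /\
  (forall i : int, exists c : R, c != 0 /\ P (i + n%:Z) = c *: (P i *m M)).

Definition three_nice (P : int -> vec) : Prop :=
  forall i : int,
    [/\ noncollinear (P i) (P (i + 1)) (P (i + 3)),
        noncollinear (P i) (P (i + 1)) (P (i + 4)),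
        noncollinear (P i) (P (i + 3)) (P (i + 4)) &
        noncollinear (P (i + 1)) (P (i + 3)) (P (i + 4))].

Definition T3 (P : int -> vec) : int -> vec :=
  fun i => meet (line (P i) (P (i + 3))) (line (P (i + 1)) (P (i + 4))).

(* Corner invariants x_{2i} and x_{2i+1}: "x_{2i} in X" and "x_{2i+1} in X". *)
Definition x_even_in (X : interval R) (P : int -> vec) (i : int) : Prop :=
  chi_in X (P (i - 2)) (P (i - 1))
    (meet (line (P (i - 2)) (P (i - 1))) (line (P i) (P (i + 1))))
    (meet (line (P (i - 2)) (P (i - 1))) (line (P (i + 1)) (P (i + 2)))).

Definition x_odd_in (X : interval R) (P : int -> vec) (i : int) : Prop :=
  chi_in X (P (i + 2)) (P (i + 1))
    (meet (line (P (i + 2)) (P (i + 1))) (line (P i) (P (i - 1))))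
    (meet (line (P (i + 2)) (P (i + 1))) (line (P (i - 1)) (P (i - 2)))).

Definition Iint : interval R := `]-oo, 0[.
Definition Jint : interval R := `]0, 1[.
Definition Kint : interval R := `]1, +oo[.

(* [P] \in S_n(X,Y) for a representative P of the class. *)
Definition in_S (n : nat) (X Y : interval R) (P : int -> vec) : Prop :=
  (exists M : 'M[R]_3, twisted_ngon n M P) /\
  (forall i : int, x_even_in X P i /\ x_odd_in Y P i).

(* T_3 maps S_n(X,Y) into itself (on representatives, the corner
   invariants being projective invariants). *)
Definition T3_preserves (n : nat) (X Y : interval R) : Prop :=
  forall (M : 'M[R]_3) (P : int -> vec),
    twisted_ngon n M P -> in_S n X Y P ->
    three_nice P /\ twisted_ngon n M (T3 P) /\ in_S n X Y (T3 P).

End Defs.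

(* Main.v *)
Require Import Defs.
From mathcomp Require Import all_boot all_order all_algebra.
From mathcomp Require Import reals.
From HB Require Import structures.
From mathcomp Require Import ring lra zify.
From Stdlib Require Import Lia.
Set Implicit Arguments. Unset Strict Implicit. Unset Printing Implicit Defensive.
Import Order.TTheory GRing.Theory Num.Theory.
Local Open Scope ring_scope.

Section S.
Variable R : realType.
Notation vec := 'rV[R]_3.
Definition mk (x y z : R) : vec := \row_(k < 3) [:: x; y; z]`_k.

Lemma vecE (u : vec) : u = mk (u 0 c0) (u 0 c1) (u 0 c2).
Proof.
apply/rowP => k; rewrite mxE; case: k => [[|[|[|k]]] Hk] //=;
  by congr (u 0 _); apply/val_inj.
Qed.
Lemma mk_eq x y z x' y' z' : x = x' -> y = y' -> z = z' -> mk x y z = mk x' y' z'.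
Proof. by move=> -> -> ->. Qed.
Lemma cross_mk x y z x' y' z' : cross (mk x y z) (mk x' y' z') =
  mk (y * z' - z * y') (z * x' - x * z') (x * y' - y * x').
Proof. by apply/rowP => k; rewrite !mxE /=. Qed.
Lemma dot_mk x y z x' y' z' : dot (mk x y z) (mk x' y' z') = x * x' + y * y' + z * z'.
Proof. by rewrite /dot !big_ord_recl big_ord0 !mxE /= addr0 addrA. Qed.
Lemma det3_mk x1 y1 z1 x2 y2 z2 x3 y3 z3 :
  det3 (mk x1 y1 z1) (mk x2 y2 z2) (mk x3 y3 z3) =
  x1 * (y2 * z3 - z2 * y3) - y1 * (x2 * z3 - z2 * x3) + z1 * (x2 * y3 - y2 * x3).
Proof.
rewrite /det3 (expand_det_row _ 0) !big_ord_recl big_ord0 /cofactor.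
rewrite !(expand_det_row _ 0) !big_ord_recl !big_ord0 /cofactor !det_mx11.
by rewrite !mxE /=; ring.
Qed.
Lemma scale_mk a x y z : a *: mk x y z = mk (a * x) (a * y) (a * z).
Proof. by apply/rowP => k; rewrite !mxE; case: k => [[|[|[|k]]] Hk] //=. Qed.
Lemma add_mk x y z x' y' z' : mk x y z + mk x' y' z' = mk (x + x') (y + y') (z + z').
Proof. by apply/rowP => k; rewrite !mxE; case: k => [[|[|[|k]]] Hk] //=; rewrite addr0. Qed.
Lemma opp_mk x y z : - mk x y z = mk (- x) (- y) (- z).
Proof. by apply/rowP => k; rewrite !mxE; case: k => [[|[|[|k]]] Hk] //=; rewrite oppr0. Qed.
Lemma sub_mk x y z x' y' z' : mk x y z - mk x' y' z' = mk (x - x') (y - y') (z - z').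
Proof. by rewrite opp_mk add_mk. Qed.

Ltac vE u := rewrite [u]vecE; set (u0 := u 0 c0); set (u1 := u 0 c1); set (u2 := u 0 c2).
Lemma mk0 x y z : mk x y z 0 c0 = x. Proof. by rewrite mxE. Qed.
Lemma mk1 x y z : mk x y z 0 c1 = y. Proof. by rewrite mxE. Qed.
Lemma mk2 x y z : mk x y z 0 c2 = z. Proof. by rewrite mxE. Qed.
Ltac mks := repeat (rewrite ?cross_mk ?dot_mk ?det3_mk ?scale_mk ?sub_mk ?add_mk ?opp_mk ?mk0 ?mk1 ?mk2).

Lemma meetE (A B C D : vec) :
  meet (line A B) (line C D) = det3 A B D *: C - det3 A B C *: D.
Proof.
rewrite /meet /line [A]vecE [B]vecE [C]vecE [D]vecE ; mks.
by apply: mk_eq; ring.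
Qed.

Lemma chi_numE (A B C D E : vec) :
  chi_num A B (meet (line A B) (line C D)) (meet (line A B) (line D E)) =
  dot (cross A B) (cross A B) * (det3 A B D * det3 C D E).
Proof.
rewrite /chi_num !meetE [A]vecE [B]vecE [C]vecE [D]vecE [E]vecE ; mks.
ring.
Qed.
Lemma chi_denE (A B C D E : vec) :
  chi_den A B (meet (line A B) (line C D)) (meet (line A B) (line D E)) =
  dot (cross A B) (cross A B) * (det3 A C D * det3 B D E).
Proof.
rewrite /chi_den !meetE [A]vecE [B]vecE [C]vecE [D]vecE [E]vecE ; mks.
ring.
Qed.
End S.
Ltac mks := repeat (rewrite ?cross_mk ?dot_mk ?det3_mk ?scale_mk ?sub_mk ?add_mk ?opp_mk ?mk0 ?mk1 ?mk2).

Section Core.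
Variable R : realType.
Notation vec := 'rV[R]_3.
Variables (a b : nat -> R).
Fixpoint r (m : nat) : vec := match m with
 | 0 => mk 1 0 0
 | 1 => mk 0 1 0
 | 2 => mk 0 0 1
 | S ((S ((S m') as m1)) as m2) => a m' *: r m2 + b m' *: r m1 + r m'
 end.
Lemma r0 : r 0 = mk 1 0 0. Proof. by []. Qed.
Lemma r1 : r 1 = mk 0 1 0. Proof. by []. Qed.
Lemma r2 : r 2 = mk 0 0 1. Proof. by []. Qed.
Lemma rS m : r m.+3 = a m *: r m.+2 + b m *: r m.+1 + r m.
Proof. by []. Qed.
Definition qr m := det3 (r m) (r m.+3) (r m.+4) *: r m.+1 - det3 (r m) (r m.+3) (r m.+1) *: r m.+4.
Definition Gh k := b k * b k.+1 * a k.+1 * a k.+2 - a k * a k.+1 * a k.+2 + b k * b k.+1 * b k.+2.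
Definition Hh k := (b k * b k.+1 - a k) * (a k.+2 * a k.+3 + b k.+3) + b k * a k.+3.
Lemma qb012 : det3 (qr 0) (qr 1) (qr 2) = Gh 0 * Gh 1.
Proof. rewrite /qr !rS r0 r1 r2; mks. rewrite /Gh. ring. Qed.
Lemma qb234 : det3 (qr 2) (qr 3) (qr 4) = Gh 2 * Gh 3.
Proof. rewrite /qr !rS r0 r1 r2; mks. rewrite /Gh. ring. Qed.
Lemma qb013 : det3 (qr 0) (qr 1) (qr 3) = a 3 * Gh 0 * Hh 1.
Proof. rewrite /qr !rS r0 r1 r2; mks. rewrite /Gh /Hh. ring. Qed.
Lemma qb023 : det3 (qr 0) (qr 2) (qr 3) = - b 1 * Gh 2 * Hh 0.
Proof. rewrite /qr !rS r0 r1 r2; mks. rewrite /Gh /Hh. ring. Qed.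
Lemma qb124 : det3 (qr 1) (qr 2) (qr 4) = a 4 * Gh 1 * Hh 2.
Proof. rewrite /qr !rS r0 r1 r2; mks. rewrite /Gh /Hh. ring. Qed.
Lemma qb134 : det3 (qr 1) (qr 3) (qr 4) = - b 2 * Gh 3 * Hh 1.
Proof. rewrite /qr !rS r0 r1 r2; mks. rewrite /Gh /Hh. ring. Qed.
End Core.

Section Gen.
Variable R : realType.
Notation vec := 'rV[R]_3.

Lemma det3_swap12 (u v w : vec) : det3 v u w = - det3 u v w.
Proof. rewrite [u]vecE [v]vecE [w]vecE; mks; ring. Qed.
Lemma det3_cyc (u v w : vec) : det3 v w u = det3 u v w.
Proof. rewrite [u]vecE [v]vecE [w]vecE; mks; ring. Qed.
Lemma det3_rev (u v w : vec) : det3 w v u = - det3 u v w.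
Proof. rewrite [u]vecE [v]vecE [w]vecE; mks; ring. Qed.
Lemma det3_swap23 (u v w : vec) : det3 u w v = - det3 u v w.
Proof. rewrite [u]vecE [v]vecE [w]vecE; mks; ring. Qed.
Lemma det3_scale x y z (u v w : vec) :
  det3 (x *: u) (y *: v) (z *: w) = x * y * z * det3 u v w.
Proof. rewrite [u]vecE [v]vecE [w]vecE; mks; ring. Qed.
Lemma cross_scale x y (u v : vec) : cross (x *: u) (y *: v) = (x * y) *: cross u v.
Proof. rewrite [u]vecE [v]vecE; mks; apply: mk_eq; ring. Qed.
Lemma meet_scale x y z w (A B C D : vec) :
  meet (line (x *: A) (y *: B)) (line (z *: C) (w *: D)) =
  (x * y * (z * w)) *: meet (line A B) (line C D).
Proof. by rewrite /meet /line !cross_scale. Qed.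
Lemma cramer (u v w z : vec) :
  det3 u v w *: z = det3 z v w *: u + det3 u z w *: v + det3 u v z *: w.
Proof. rewrite [u]vecE [v]vecE [w]vecE [z]vecE; mks; apply: mk_eq; ring. Qed.

Definition combv (e0 e1 e2 u : vec) : vec :=
  u 0 c0 *: e0 + u 0 c1 *: e1 + u 0 c2 *: e2.
Lemma combv_lin (e0 e1 e2 u v : vec) x y :
  combv e0 e1 e2 (x *: u + y *: v) = x *: combv e0 e1 e2 u + y *: combv e0 e1 e2 v.
Proof.
rewrite /combv [u]vecE [v]vecE [e0]vecE [e1]vecE [e2]vecE; mks; apply: mk_eq; ring.
Qed.
Lemma combv_sub (e0 e1 e2 u v : vec) x y :
  combv e0 e1 e2 (x *: u - y *: v) = x *: combv e0 e1 e2 u - y *: combv e0 e1 e2 v.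
Proof.
rewrite /combv [u]vecE [v]vecE [e0]vecE [e1]vecE [e2]vecE; mks; apply: mk_eq; ring.
Qed.
Lemma combv_rec (e0 e1 e2 u v w : vec) x y :
  combv e0 e1 e2 (x *: u + y *: v + w) =
  x *: combv e0 e1 e2 u + y *: combv e0 e1 e2 v + combv e0 e1 e2 w.
Proof.
rewrite /combv [u]vecE [v]vecE [w]vecE [e0]vecE [e1]vecE [e2]vecE; mks; apply: mk_eq; ring.
Qed.
Lemma combv100 (e0 e1 e2 : vec) : combv e0 e1 e2 (mk 1 0 0) = e0.
Proof. rewrite /combv; mks. by rewrite !scale1r !scale0r !addr0. Qed.
Lemma combv010 (e0 e1 e2 : vec) : combv e0 e1 e2 (mk 0 1 0) = e1.
Proof. rewrite /combv; mks. by rewrite !scale1r !scale0r add0r addr0. Qed.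
Lemma combv001 (e0 e1 e2 : vec) : combv e0 e1 e2 (mk 0 0 1) = e2.
Proof. rewrite /combv; mks. by rewrite !scale1r !scale0r !add0r. Qed.
Lemma det3_combv (e0 e1 e2 u v w : vec) :
  det3 (combv e0 e1 e2 u) (combv e0 e1 e2 v) (combv e0 e1 e2 w) =
  det3 u v w * det3 e0 e1 e2.
Proof.
rewrite /combv [u]vecE [v]vecE [w]vecE [e0]vecE [e1]vecE [e2]vecE; mks; ring.
Qed.

Lemma sq3_0 (x y z d0 d1 d2 : R) : x * x + y * y + z * z = 0 -> x * d0 + y * d1 + z * d2 = 0.
Proof.
move=> H.
have : x * x = 0 by nra.
move/eqP; rewrite mulf_eq0 orbb => /eqP ->.
have : y * y = 0 by nra.
move/eqP; rewrite mulf_eq0 orbb => /eqP ->.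
have : z * z = 0 by nra.
move/eqP; rewrite mulf_eq0 orbb => /eqP ->.
by rewrite !mul0r !addr0.
Qed.
Lemma dotLL_neq0 (A B D : vec) : det3 A B D != 0 -> dot (cross A B) (cross A B) != 0.
Proof.
have -> : det3 A B D = dot (cross A B) D.
  by rewrite [A]vecE [B]vecE [D]vecE; mks; ring.
move: (cross A B) => L. rewrite [L]vecE [D]vecE !dot_mk.
apply: contra_neq; exact: sq3_0.
Qed.

Lemma divKK (k n d : R) : k != 0 -> (k * n) / (k * d) = n / d.
Proof. by move=> hk; rewrite invfM mulrACA mulfV // mul1r. Qed.
Lemma mulKeq0 (k x : R) : k != 0 -> (k * x != 0) = (x != 0).
Proof. by move=> hk; rewrite mulf_eq0 (negbTE hk). Qed.

Definition rx (A B C D E : vec) : R :=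
  det3 A B D * det3 C D E / (det3 A C D * det3 B D E).
Definition chi5 (X : interval R) (A B C D E : vec) :=
  chi_in X A B (meet (line A B) (line C D)) (meet (line A B) (line D E)).
Definition bx (X : interval R) (A B C D E : vec) :=
  [/\ det3 A B D != 0, det3 A C D * det3 B D E != 0 & rx A B C D E \in X].

Lemma chi5_bx X A B C D E : 0 \notin X -> chi5 X A B C D E <-> bx X A B C D E.
Proof.
move=> h0; rewrite /chi5 /chi_in chi_numE chi_denE /bx.
split.
- case=> hd hin.
  have hL : dot (cross A B) (cross A B) != 0.
    by apply: contraNneq hd => ->; rewrite mul0r.
  rewrite divKK // in hin.
  have hd' : det3 A C D * det3 B D E != 0 by rewrite mulKeq0 in hd.
  split => //.
  apply: contraNneq h0 => e. by rewrite -(_ : rx A B C D E = 0) // /rx e !mul0r.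
- case=> h1 h2 h3.
  have hL := dotLL_neq0 h1.
  split; first by rewrite mulKeq0.
  by rewrite divKK.
Qed.

Lemma rx_scale x0 x1 x2 x3 x4 A B C D E :
  x0 != 0 -> x1 != 0 -> x2 != 0 -> x3 != 0 -> x4 != 0 ->
  rx (x0 *: A) (x1 *: B) (x2 *: C) (x3 *: D) (x4 *: E) = rx A B C D E.
Proof.
move=> h0 h1 h2 h3 h4; rewrite /rx !det3_scale.
have hk : x0 * x1 * x2 * x3 * x3 * x4 != 0 by rewrite !mulf_neq0.
rewrite -[RHS](divKK _ _ hk); congr (_ / _); ring.
Qed.

Lemma bx_scale X x0 x1 x2 x3 x4 A B C D E :
  x0 != 0 -> x1 != 0 -> x2 != 0 -> x3 != 0 -> x4 != 0 ->
  bx X (x0 *: A) (x1 *: B) (x2 *: C) (x3 *: D) (x4 *: E) <-> bx X A B C D E.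
Proof.
move=> h0 h1 h2 h3 h4; rewrite /bx rx_scale // !det3_scale.
rewrite (@mulKeq0 (x0 * x1 * x3)); last by rewrite !mulf_neq0.
have -> : x0 * x2 * x3 * det3 A C D * (x1 * x3 * x4 * det3 B D E) =
   (x0 * x2 * x3 * (x1 * x3 * x4)) * (det3 A C D * det3 B D E) by ring.
by rewrite (@mulKeq0 (x0 * x2 * x3 * (x1 * x3 * x4))) // !mulf_neq0.
Qed.

Lemma mulmx_mk x y z (M : 'M[R]_3) :
  mk x y z *m M = mk (x * M c0 c0 + y * M c1 c0 + z * M c2 c0)
                     (x * M c0 c1 + y * M c1 c1 + z * M c2 c1)
                     (x * M c0 c2 + y * M c1 c2 + z * M c2 c2).
Proof.
apply/rowP => k; rewrite !mxE !big_ord_recl big_ord0 !mxE /= addr0.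
case: k => [[|[|[|k]]] Hk] //=; rewrite addrA; congr (_ + _ + _); congr (_ * M _ _); exact/val_inj.
Qed.
Lemma detM_E (M : 'M[R]_3) :
  \det M = det3 (mk (M c0 c0) (M c0 c1) (M c0 c2)) (mk (M c1 c0) (M c1 c1) (M c1 c2))
                 (mk (M c2 c0) (M c2 c1) (M c2 c2)).
Proof.
rewrite /det3; congr (\det _); apply/matrixP => i j; rewrite !mxE.
case: i => [[|[|[|i]]] Hi] //=; rewrite ?mxE /=;
  (case: j => [[|[|[|j]]] Hj] //=; congr (M _ _); exact/val_inj).
Qed.
Lemma mono (M : 'M[R]_3) (u v x y : vec) :
  cross (cross (u *m M) (v *m M)) (cross (x *m M) (y *m M)) =
  \det M *: (cross (cross u v) (cross x y) *m M).
Proof.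
rewrite detM_E [u]vecE [v]vecE [x]vecE [y]vecE !mulmx_mk; mks.
rewrite ?mulmx_mk; mks; apply: mk_eq; ring.
Qed.
End Gen.

Section NC.
Variable R : realType.
Notation vec := 'rV[R]_3.

Definition goodXY (X Y : interval R) : Prop :=
 [/\ 0 \notin X, 0 \notin Y & forall x0 x1 x2 x3 y0 y1 y2 y3 y4 : R,
   x0 \in X -> x1 \in X -> x2 \in X -> x3 \in X ->
   y0 \in Y -> y1 \in Y -> y2 \in Y -> y3 \in Y -> y4 \in Y ->
 [/\ x0 != 1 /\ y0 != 1,
    [/\ 1 - x0 - y1 != 0, 1 - x1 - y2 != 0, 1 - x2 - y3 != 0 & 1 - x3 - y4 != 0],
    [/\ (1 - x0) * (1 - y2) - x1 * y1 != 0, (1 - x1) * (1 - y3) - x2 * y2 != 0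
      & (1 - x2) * (1 - y4) - x3 * y3 != 0],
    x1 * (1 - x0 - y1) / ((1 - x0) * (1 - y2) - x1 * y1) \in X &
    y3 * (1 - x3 - y4) / ((1 - x2) * (1 - y4) - x3 * y3) \in Y]].

Definition Dp (p : nat -> vec) m := det3 (p m) (p m.+1) (p m.+2).
Definition ca (p : nat -> vec) m := det3 (p m) (p m.+1) (p m.+3).
Definition cb (p : nat -> vec) m := - det3 (p m) (p m.+2) (p m.+3).
Definition xv (a b : nat -> R) k := a k / (b k * b k.+1).
Definition yv (a b : nat -> R) k := - b k.+1 / (a k * a k.+1).
Definition Gf a b k := 1 - xv a b k - yv a b k.+1.
Definition Hf a b k := (1 - xv a b k) * (1 - yv a b k.+2) - xv a b k.+1 * yv a b k.+1.

Lemma det3_cyc2 (u v w : vec) : det3 w u v = det3 u v w.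
Proof. by rewrite -det3_cyc -det3_cyc. Qed.

Lemma Gh_Gf (a b : nat -> R) k : a k.+1 != 0 -> a k.+2 != 0 -> b k != 0 -> b k.+1 != 0 ->
  Gh a b k = Gf a b k * (b k * b k.+1 * a k.+1 * a k.+2).
Proof. move=> *; rewrite /Gh /Gf /xv /yv; field; by do ![apply/andP; split] => //. Qed.
Lemma Hh_Hf (a b : nat -> R) k : a k.+1 != 0 -> a k.+2 != 0 -> a k.+3 != 0 ->
  b k != 0 -> b k.+1 != 0 -> b k.+2 != 0 ->
  Hh a b k = Hf a b k * (b k * b k.+1 * a k.+2 * a k.+3).
Proof. move=> *; rewrite /Hh /Hf /xv /yv; field; by do ![apply/andP; split] => //. Qed.

Lemma norm_core (X Y : interval R) (p : nat -> vec) : goodXY X Y ->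
 (forall m, (m <= 6)%N -> Dp p m = 1) ->
 (forall k, (k <= 4)%N -> bx X (p k) (p k.+1) (p k.+2) (p k.+3) (p k.+4) /\
                          bx Y (p k.+4) (p k.+3) (p k.+2) (p k.+1) (p k)) ->
 let q m := meet (line (p m) (p m.+3)) (line (p m.+1) (p m.+4)) in
 [/\ bx X (q 0) (q 1) (q 2) (q 3) (q 4), bx Y (q 4) (q 3) (q 2) (q 1) (q 0),
     det3 (q 0) (q 1) (q 2) != 0 &
    [/\ det3 (p 0) (p 1) (p 3) != 0, det3 (p 0) (p 1) (p 4) != 0,
        det3 (p 0) (p 3) (p 4) != 0 & det3 (p 1) (p 3) (p 4) != 0]].
Proof.
move=> [g0X g0Y good] hD hb q.
set a := ca p; set b := cb p.
have rec m : (m <= 5)%N -> p m.+3 = a m *: p m.+2 + b m *: p m.+1 + p m.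
  move=> hm; have := cramer (p m) (p m.+1) (p m.+2) (p m.+3).
  have -> : det3 (p m) (p m.+1) (p m.+2) = 1 by apply: hD; lia.
  have -> : det3 (p m.+3) (p m.+1) (p m.+2) = 1.
    by rewrite det3_cyc2; apply: (hD m.+1); lia.
  rewrite det3_swap23 -/(cb p m) -/(ca p m) -/a -/b !scale1r => ->.
  by rewrite addrC [p m + _]addrC addrA.
have comb m : (m <= 8)%N -> p m = combv (p 0) (p 1) (p 2) (r a b m).
  move=> hm.
  suff H : forall m, (m <= 6)%N -> [/\ p m = combv (p 0) (p 1) (p 2) (r a b m),
     p m.+1 = combv (p 0) (p 1) (p 2) (r a b m.+1) &
     p m.+2 = combv (p 0) (p 1) (p 2) (r a b m.+2)].
    have [hm6|hm6] := leqP m 6; first by case: (H m hm6).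
    have [->|hm7] := eqVneq m 7; first by case: (H 6 isT).
    have -> : m = 8 by lia.
    by case: (H 6 isT).
  elim => [_|k IH hk].
    by rewrite /= combv100 combv010 combv001.
  case: (IH (ltnW hk)) => h0 h1 h2; split => //.
  rewrite rec; last by lia.
  by rewrite h0 h1 h2 /= combv_rec.
have D0 : det3 (p 0) (p 1) (p 2) = 1 by apply: (hD 0).
have dr i j k : (i <= 8)%N -> (j <= 8)%N -> (k <= 8)%N ->
    det3 (p i) (p j) (p k) = det3 (r a b i) (r a b j) (r a b k).
  by move=> hi hj hk; rewrite (comb i) // (comb j) // (comb k) // det3_combv D0 mulr1.
have qE m : (m <= 4)%N -> q m = combv (p 0) (p 1) (p 2) (qr a b m).
  move=> hm; rewrite /q meetE /qr combv_sub.
  rewrite -!(dr m) ?(leq_trans hm) //; try lia.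
  by rewrite -!comb //; lia.
have dq i j k : (i <= 4)%N -> (j <= 4)%N -> (k <= 4)%N ->
    det3 (q i) (q j) (q k) = det3 (qr a b i) (qr a b j) (qr a b k).
  by move=> hi hj hk; rewrite (qE i) // (qE j) // (qE k) // det3_combv D0 mulr1.
have hx k : (k <= 4)%N -> [/\ a k != 0, b k != 0, b k.+1 != 0 & xv a b k \in X].
  move=> hk; case: (hb k hk) => [[h1 h2 h3] _].
  have e1 : det3 (p k) (p k.+2) (p k.+3) = - b k by rewrite /b /cb opprK.
  have e2 : det3 (p k.+1) (p k.+3) (p k.+4) = - b k.+1 by rewrite /b /cb opprK.
  have e3 : det3 (p k.+2) (p k.+3) (p k.+4) = 1 by apply: (hD k.+2); lia.
  move: h1 h2 h3; rewrite /rx e1 e2 e3 -/(ca p k) -/a mulr1 mulrNN mulf_eq0 negb_or => h1 /andP[hb0 hb1] h3.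
  by split.
have hy k : (k <= 4)%N -> [/\ a k != 0, a k.+1 != 0 & yv a b k \in Y].
  move=> hk; case: (hb k hk) => [_ [h1 h2 h3]].
  have f1 : det3 (p k.+4) (p k.+3) (p k.+1) = b k.+1 by rewrite det3_rev.
  have f2 : det3 (p k.+2) (p k.+1) (p k) = - 1 by rewrite det3_rev; congr (- _); apply: (hD k); lia.
  have f3 : det3 (p k.+4) (p k.+2) (p k.+1) = - a k.+1 by rewrite det3_rev.
  have f4 : det3 (p k.+3) (p k.+1) (p k) = - a k by rewrite det3_rev.
  move: h2 h3; rewrite /rx f1 f2 f3 f4 mulrN1 mulrNN mulf_eq0 negb_or => /andP[ha1 ha0] h3.
  split => //.
  by rewrite /yv [a k * _]mulrC.
have [na0 nb0 nb1 hx0] := hx 0 isT.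
have [na1 _ nb2 hx1] := hx 1 isT.
have [na2 _ nb3 hx2] := hx 2 isT.
have [na3 _ nb4 hx3] := hx 3 isT.
have [na4 _ nb5 _] := hx 4 isT.
have [_ _ hy0] := hy 0 isT.
have [_ _ hy1] := hy 1 isT.
have [_ _ hy2] := hy 2 isT.
have [_ _ hy3] := hy 3 isT.
have [_ na5 hy4] := hy 4 isT.
have [[x0n1 y0n1] [G0 G1 G2 G3] [H0 H1 H2] mX mY] :=
  good _ _ _ _ _ _ _ _ _ hx0 hx1 hx2 hx3 hy0 hy1 hy2 hy3 hy4.
have eG0 := Gh_Gf na1 na2 nb0 nb1.
have eG1 := Gh_Gf na2 na3 nb1 nb2.
have eG2 := Gh_Gf na3 na4 nb2 nb3.
have eG3 := Gh_Gf na4 na5 nb3 nb4.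
have eH0 := Hh_Hf na1 na2 na3 nb0 nb1 nb2.
have eH1 := Hh_Hf na2 na3 na4 nb1 nb2 nb3.
have eH2 := Hh_Hf na3 na4 na5 nb2 nb3 nb4.
have G0' : Gf a b 0 != 0 by [].
have G1' : Gf a b 1 != 0 by [].
have G2' : Gf a b 2 != 0 by [].
have G3' : Gf a b 3 != 0 by [].
have H0' : Hf a b 0 != 0 by [].
have H1' : Hf a b 1 != 0 by [].
have H2' : Hf a b 2 != 0 by [].
split.
- rewrite /bx /rx !dq // qb013 qb234 qb023 qb134 eG0 eG2 eG3 eH0 eH1.
  split; first by rewrite !mulf_neq0.
    by rewrite !mulf_neq0 // oppr_eq0.
  rewrite (_ : _ / _ = xv a b 1 * Gf a b 0 / Hf a b 0) //.
  rewrite /xv.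
  move: (Gf a b 0) (Gf a b 2) (Gf a b 3) (Hf a b 0) (Hf a b 1) G0' G2' G3' H0' H1' => g0 g2 g3 h0 h1 *.
  field; by do ![apply/andP; split].
- rewrite /bx /rx (det3_rev (q 1) (q 3) (q 4)) (det3_rev (q 0) (q 1) (q 2)).
  rewrite (det3_rev (q 1) (q 2) (q 4)) (det3_rev (q 0) (q 1) (q 3)).
  rewrite !dq // qb134 qb012 qb124 qb013 eG0 eG1 eG3 eH1 eH2.
  split; first by rewrite oppr_eq0 !mulf_neq0 // oppr_eq0.
    by rewrite mulNr mulrN opprK !mulf_neq0.
  rewrite (_ : _ / _ = yv a b 3 * Gf a b 3 / Hf a b 2) //.
  rewrite /yv.
  move: (Gf a b 0) (Gf a b 1) (Gf a b 3) (Hf a b 1) (Hf a b 2) G0' G1' G3' H1' H2' => g0 g1 g3 h1 h2 *.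
  field; by do ![apply/andP; split].
- by rewrite !dq // qb012 eG0 eG1 !mulf_neq0.
have r04 : det3 (p 0) (p 1) (p 4) = a 0 * a 1 + b 1.
  by rewrite dr // !rS r0 r1 r2; mks; ring.
have r034 : det3 (p 0) (p 3) (p 4) = b 0 * b 1 - a 0.
  by rewrite dr // !rS r0 r1 r2; mks; ring.
split => //.
- rewrite r04; apply: contra_neq y0n1 => e.
  rewrite /yv (_ : b 1 = - (a 0 * a 1)); last by apply/eqP; rewrite -addr_eq0 addrC e.
  by rewrite opprK divff // mulf_neq0.
- rewrite r034; apply: contra_neq x0n1 => e.
  rewrite /xv (_ : a 0 = b 0 * b 1); last by apply/eqP; rewrite eq_sym -subr_eq0 e.
  by rewrite divff // mulf_neq0.
- by rewrite -[det3 _ _ _]opprK -/(cb p 1) -/b oppr_eq0.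
Qed.
End NC.

Section GC.
Variable R : realType.
Notation vec := 'rV[R]_3.

Lemma neq0_mulr (k x : R) : k * x != 0 -> x != 0.
Proof. by apply: contra_neq => ->; rewrite mulr0. Qed.

Fixpoint lam (D : nat -> R) (m : nat) : R := match m with
 | 0 => 1
 | 1 => 1
 | 2 => (D 0)^-1
 | S ((S ((S m') as m1)) as m2) => lam D m' * D m' / D m1
 end.

Lemma lam_inv (D : nat -> R) : (forall m, (m <= 6)%N -> D m != 0) ->
  forall m, (m <= 6)%N -> lam D m * lam D m.+1 * lam D m.+2 * D m = 1.
Proof.
move=> hD; elim => [_|m IH hm].
  by rewrite /= !mul1r mulVf //; apply: hD.
have d1 : D m.+1 != 0 by apply: hD.
rewrite (_ : lam D m.+3 = lam D m * D m / D m.+1) // -[RHS](IH (ltnW hm)).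
by field.
Qed.

Lemma lam_neq0 (D : nat -> R) : (forall m, (m <= 6)%N -> D m != 0) ->
  forall m, (m <= 8)%N -> lam D m != 0.
Proof.
move=> hD m hm.
have H := lam_inv hD.
have [hm6|hm6] := leqP m 6.
  by move: (H m hm6) => e; apply/eqP => z; move: e; rewrite z ?mulr0 ?mul0r => /eqP; rewrite eq_sym oner_eq0.
have : m = 7 \/ m = 8 by lia.
case => ->.
  by move: (H 5 isT) => e; apply/eqP => z; move: e; rewrite z ?mulr0 ?mul0r => /eqP; rewrite eq_sym oner_eq0.
by move: (H 6 isT) => e; apply/eqP => z; move: e; rewrite z ?mulr0 ?mul0r => /eqP; rewrite eq_sym oner_eq0.
Qed.

Lemma gen_core (X Y : interval R) (p : nat -> vec) : goodXY X Y ->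
 (forall m, (m <= 6)%N -> Dp p m != 0) ->
 (forall k, (k <= 4)%N -> bx X (p k) (p k.+1) (p k.+2) (p k.+3) (p k.+4) /\
                          bx Y (p k.+4) (p k.+3) (p k.+2) (p k.+1) (p k)) ->
 let q m := meet (line (p m) (p m.+3)) (line (p m.+1) (p m.+4)) in
 [/\ bx X (q 0) (q 1) (q 2) (q 3) (q 4), bx Y (q 4) (q 3) (q 2) (q 1) (q 0),
     det3 (q 0) (q 1) (q 2) != 0 &
    [/\ det3 (p 0) (p 1) (p 3) != 0, det3 (p 0) (p 1) (p 4) != 0,
        det3 (p 0) (p 3) (p 4) != 0 & det3 (p 1) (p 3) (p 4) != 0]].
Proof.
move=> good hD hb q.
have linv := lam_inv hD.
have lnz := lam_neq0 hD.
move: (lam (Dp p)) linv lnz => l linv ln.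
pose p' m := l m *: p m.
have hD' m : (m <= 6)%N -> Dp p' m = 1.
  by move=> hm; rewrite /Dp /p' det3_scale; apply: linv.
have hb' k : (k <= 4)%N -> bx X (p' k) (p' k.+1) (p' k.+2) (p' k.+3) (p' k.+4) /\
                          bx Y (p' k.+4) (p' k.+3) (p' k.+2) (p' k.+1) (p' k).
  move=> hk; rewrite /p' !bx_scale; try (apply: ln; lia); exact: hb.
case: (norm_core good hD' hb') => h1 h2 h3 [h4 h5 h6 h7].
have qq m : (m <= 4)%N -> meet (line (p' m) (p' m.+3)) (line (p' m.+1) (p' m.+4)) =
   (l m * l m.+3 * (l m.+1 * l m.+4)) *: q m.
  by move=> hm; rewrite /p' meet_scale.
have qn m : (m <= 4)%N -> l m * l m.+3 * (l m.+1 * l m.+4) != 0.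
  by move=> hm; do !apply: mulf_neq0; apply: ln; lia.
rewrite !qq // in h1 h2 h3.
move/(@bx_scale _ X _ _ _ _ _ _ _ _ _ _ (qn 0 isT) (qn 1 isT) (qn 2 isT) (qn 3 isT) (qn 4 isT)): h1 => h1.
move/(@bx_scale _ Y _ _ _ _ _ _ _ _ _ _ (qn 4 isT) (qn 3 isT) (qn 2 isT) (qn 1 isT) (qn 0 isT)): h2 => h2.
rewrite /p' !det3_scale in h3 h4 h5 h6 h7.
split => //.
- exact: neq0_mulr h3.
- split; [exact: neq0_mulr h4|exact: neq0_mulr h5|exact: neq0_mulr h6|exact: neq0_mulr h7].
Qed.
End GC.

Section GD.
Variable R : realType.

Lemma rneg (d n : R) : 0 < d -> n < 0 -> n / d < 0.
Proof. by move=> hd hn; rewrite ltr_pdivrMr // mul0r. Qed.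
Lemma r01 (d n : R) : 0 < d -> 0 < n -> n < d -> (0 < n / d) && (n / d < 1).
Proof. by move=> hd hn hnd; rewrite divr_gt0 //= ltr_pdivrMr // mul1r. Qed.
Lemma rgt1 (d n : R) : 0 < d -> d < n -> 1 < n / d.
Proof. by move=> hd hnd; rewrite ltr_pdivlMr // mul1r. Qed.
Lemma pneq0 (x : R) : 0 < x -> x != 0.
Proof. by move=> h; rewrite gt_eqF. Qed.
Lemma nneq0 (x : R) : x < 0 -> x != 0.
Proof. by move=> h; rewrite lt_eqF. Qed.
Lemma pneq1 (x : R) : 1 < x -> x != 1.
Proof. by move=> h; rewrite gt_eqF. Qed.
Lemma nneq1 (x : R) : x < 1 -> x != 1.
Proof. by move=> h; rewrite lt_eqF. Qed.

Lemma goodIJ : goodXY (Iint R) (Jint R).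
Proof.
split; [by rewrite /Iint in_itv /= ltxx | by rewrite /Jint in_itv /= ltxx |].
move=> x0 x1 x2 x3 y0 y1 y2 y3 y4; rewrite /Iint /Jint !in_itv /=.
move=> hx0 hx1 hx2 hx3 /andP[hy0 hy0'] /andP[hy1 hy1'] /andP[hy2 hy2'] /andP[hy3 hy3'] /andP[hy4 hy4'].
have g0 : 0 < 1 - x0 - y1 by lra.
have g1 : 0 < 1 - x1 - y2 by lra.
have g2 : 0 < 1 - x2 - y3 by lra.
have g3 : 0 < 1 - x3 - y4 by lra.
have h0 : 0 < (1 - x0) * (1 - y2) - x1 * y1 by nra.
have h1 : 0 < (1 - x1) * (1 - y3) - x2 * y2 by nra.
have h2 : 0 < (1 - x2) * (1 - y4) - x3 * y3 by nra.
split.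
- by split; [apply: nneq1; lra | apply: nneq1].
- by split; apply: pneq0.
- by split; apply: pneq0.
- by apply: rneg => //; nra.
- apply: r01 => //; first by nra.
  have -> : (1 - x2) * (1 - y4) - x3 * y3 = y3 * (1 - x3 - y4) + (1 - y4) * (1 - x2 - y3) by ring.
  by rewrite ltrDl; apply: mulr_gt0; lra.
Qed.

Lemma goodKJ : goodXY (Kint R) (Jint R).
Proof.
split; [by rewrite /Kint in_itv /= ltr10 | by rewrite /Jint in_itv /= ltxx |].
move=> x0 x1 x2 x3 y0 y1 y2 y3 y4; rewrite /Kint /Jint !in_itv /= ?andbT.
move=> hx0 hx1 hx2 hx3 /andP[hy0 hy0'] /andP[hy1 hy1'] /andP[hy2 hy2'] /andP[hy3 hy3'] /andP[hy4 hy4'].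
have g0 : 1 - x0 - y1 < 0 by lra.
have g1 : 1 - x1 - y2 < 0 by lra.
have g2 : 1 - x2 - y3 < 0 by lra.
have g3 : 1 - x3 - y4 < 0 by lra.
have h0 : (1 - x0) * (1 - y2) - x1 * y1 < 0 by nra.
have h1 : (1 - x1) * (1 - y3) - x2 * y2 < 0 by nra.
have h2 : (1 - x2) * (1 - y4) - x3 * y3 < 0 by nra.
split.
- by split; [apply: pneq1 | apply: nneq1].
- by split; apply: nneq0.
- by split; apply: nneq0.
- rewrite -divrNN; apply: rgt1; first by lra.
  have -> : (1 - x0) * (1 - y2) - x1 * y1 = x1 * (1 - x0 - y1) + (1 - x0) * (1 - x1 - y2) by ring.
  have : 0 < (1 - x0) * (1 - x1 - y2) by rewrite -mulrNN; apply: mulr_gt0; lra.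
  lra.
- rewrite -divrNN; apply: r01; [lra | nra |].
  have -> : (1 - x2) * (1 - y4) - x3 * y3 = y3 * (1 - x3 - y4) + (1 - y4) * (1 - x2 - y3) by ring.
  have : 0 < (1 - y4) * - (1 - x2 - y3) by apply: mulr_gt0; lra.
  lra.
Qed.

Lemma goodJI : goodXY (Jint R) (Iint R).
Proof.
split; [by rewrite /Jint in_itv /= ltxx | by rewrite /Iint in_itv /= ltxx |].
move=> x0 x1 x2 x3 y0 y1 y2 y3 y4; rewrite /Iint /Jint !in_itv /=.
move=> /andP[hx0 hx0'] /andP[hx1 hx1'] /andP[hx2 hx2'] /andP[hx3 hx3'] hy0 hy1 hy2 hy3 hy4.
have g0 : 0 < 1 - x0 - y1 by lra.
have g1 : 0 < 1 - x1 - y2 by lra.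
have g2 : 0 < 1 - x2 - y3 by lra.
have g3 : 0 < 1 - x3 - y4 by lra.
have h0 : 0 < (1 - x0) * (1 - y2) - x1 * y1 by nra.
have h1 : 0 < (1 - x1) * (1 - y3) - x2 * y2 by nra.
have h2 : 0 < (1 - x2) * (1 - y4) - x3 * y3 by nra.
split.
- by split; apply: nneq1; lra.
- by split; apply: pneq0.
- by split; apply: pneq0.
- apply: r01 => //; first by nra.
  have -> : (1 - x0) * (1 - y2) - x1 * y1 = x1 * (1 - x0 - y1) + (1 - x0) * (1 - x1 - y2) by ring.
  by rewrite ltrDl; apply: mulr_gt0; lra.
- by apply: rneg => //; nra.
Qed.

Lemma goodJK : goodXY (Jint R) (Kint R).
Proof.
split; [by rewrite /Jint in_itv /= ltxx | by rewrite /Kint in_itv /= ltr10 |].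
move=> x0 x1 x2 x3 y0 y1 y2 y3 y4; rewrite /Kint /Jint !in_itv /= ?andbT.
move=> /andP[hx0 hx0'] /andP[hx1 hx1'] /andP[hx2 hx2'] /andP[hx3 hx3'] hy0 hy1 hy2 hy3 hy4.
have g0 : 1 - x0 - y1 < 0 by lra.
have g1 : 1 - x1 - y2 < 0 by lra.
have g2 : 1 - x2 - y3 < 0 by lra.
have g3 : 1 - x3 - y4 < 0 by lra.
have h0 : (1 - x0) * (1 - y2) - x1 * y1 < 0 by nra.
have h1 : (1 - x1) * (1 - y3) - x2 * y2 < 0 by nra.
have h2 : (1 - x2) * (1 - y4) - x3 * y3 < 0 by nra.
split.
- by split; [apply: nneq1 | apply: pneq1].
- by split; apply: nneq0.
- by split; apply: nneq0.
- rewrite -divrNN; apply: r01; [lra | nra |].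
  have -> : (1 - x0) * (1 - y2) - x1 * y1 = x1 * (1 - x0 - y1) + (1 - x0) * (1 - x1 - y2) by ring.
  have : 0 < (1 - x0) * - (1 - x1 - y2) by apply: mulr_gt0; lra.
  lra.
- rewrite -divrNN; apply: rgt1; first by lra.
  have -> : (1 - x2) * (1 - y4) - x3 * y3 = y3 * (1 - x3 - y4) + (1 - y4) * (1 - x2 - y3) by ring.
  have : 0 < (1 - y4) * (1 - x2 - y3) by rewrite -mulrNN; apply: mulr_gt0; lra.
  lra.
Qed.
End GD.

Section GL.
Variable R : realType.
Notation vec := 'rV[R]_3.

Lemma loc_core (X Y : interval R) (P : int -> vec) (i : int) : goodXY X Y ->
  (forall j, noncollinear (P j) (P (j + 1)) (P (j + 2))) ->
  (forall j, x_even_in X P j /\ x_odd_in Y P j) ->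
  [/\ bx X (T3 P (i + 0%:Z)) (T3 P (i + 1%:Z)) (T3 P (i + 2%:Z)) (T3 P (i + 3%:Z)) (T3 P (i + 4%:Z)),
      bx Y (T3 P (i + 4%:Z)) (T3 P (i + 3%:Z)) (T3 P (i + 2%:Z)) (T3 P (i + 1%:Z)) (T3 P (i + 0%:Z)),
      det3 (T3 P (i + 0%:Z)) (T3 P (i + 1%:Z)) (T3 P (i + 2%:Z)) != 0 &
      [/\ det3 (P (i + 0%:Z)) (P (i + 1%:Z)) (P (i + 3%:Z)) != 0,
          det3 (P (i + 0%:Z)) (P (i + 1%:Z)) (P (i + 4%:Z)) != 0,
          det3 (P (i + 0%:Z)) (P (i + 3%:Z)) (P (i + 4%:Z)) != 0 &
          det3 (P (i + 1%:Z)) (P (i + 3%:Z)) (P (i + 4%:Z)) != 0]].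
Proof.
move=> good hnc hS.
have [g0X g0Y _] := good.
pose p := fun m : nat => P (i + m%:Z).
have hD m : (m <= 6)%N -> Dp p m != 0.
  move=> _; rewrite /Dp /p.
  rewrite (_ : i + m.+1%:Z = i + m%:Z + 1); last by lia.
  rewrite (_ : i + m.+2%:Z = i + m%:Z + 2); last by lia.
  exact: hnc.
have hb k : (k <= 4)%N -> bx X (p k) (p k.+1) (p k.+2) (p k.+3) (p k.+4) /\
                          bx Y (p k.+4) (p k.+3) (p k.+2) (p k.+1) (p k).
  move=> _; have [he ho] := hS (i + k.+2%:Z).
  have he' : chi5 X (P (i + k.+2%:Z - 2)) (P (i + k.+2%:Z - 1)) (P (i + k.+2%:Z))
       (P (i + k.+2%:Z + 1)) (P (i + k.+2%:Z + 2)) := he.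
  have ho' : chi5 Y (P (i + k.+2%:Z + 2)) (P (i + k.+2%:Z + 1)) (P (i + k.+2%:Z))
       (P (i + k.+2%:Z - 1)) (P (i + k.+2%:Z - 2)) := ho.
  rewrite (_ : i + k.+2%:Z - 2 = i + k%:Z) in he' ho'; last by lia.
  rewrite (_ : i + k.+2%:Z - 1 = i + k.+1%:Z) in he' ho'; last by lia.
  rewrite (_ : i + k.+2%:Z + 1 = i + k.+3%:Z) in he' ho'; last by lia.
  rewrite (_ : i + k.+2%:Z + 2 = i + k.+4%:Z) in he' ho'; last by lia.
  by split; apply/chi5_bx.
have tq m : T3 P (i + m%:Z) = meet (line (p m) (p m.+3)) (line (p m.+1) (p m.+4)).
  rewrite /T3 /p.
  rewrite (_ : i + m%:Z + 3 = i + m.+3%:Z); last by lia.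
  rewrite (_ : i + m%:Z + 1 = i + m.+1%:Z); last by lia.
  by rewrite (_ : i + m%:Z + 4 = i + m.+4%:Z); last by lia.
have := gen_core good hD hb; rewrite /= => -[h1 h2 h3 h4].
by rewrite !tq.
Qed.

Lemma preserves (n : nat) (X Y : interval R) : goodXY X Y -> T3_preserves n X Y.
Proof.
move=> good M P tw [_ hS].
have [g0X g0Y _] := good.
case: tw => hM [hnc hmon].
have nice : three_nice P.
  move=> i; have [_ _ _ [h1 h2 h3 h4]] := @loc_core X Y P i good hnc hS.
  rewrite addr0 in h1 h2 h3.
  by split; rewrite /noncollinear.
have twQ : twisted_ngon n M (T3 P).
  split => //; split.
  - move=> i; have [_ _ h _] := @loc_core X Y P i good hnc hS.
    by rewrite addr0 in h.
  - move=> i.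
    have [c0 [n0 e0]] := hmon i.
    have [c1 [n1 e1]] := hmon (i + 1).
    have [c3 [n3 e3]] := hmon (i + 3).
    have [c4 [n4 e4]] := hmon (i + 4).
    have hdM : \det M != 0 by rewrite -unitfE -unitmxE.
    exists (c0 * c3 * (c1 * c4) * \det M); split; first by rewrite !mulf_neq0.
    rewrite /T3.
    rewrite (_ : i + n%:Z + 3 = i + 3 + n%:Z); last by lia.
    rewrite (_ : i + n%:Z + 1 = i + 1 + n%:Z); last by lia.
    rewrite (_ : i + n%:Z + 4 = i + 4 + n%:Z); last by lia.
    rewrite e0 e1 e3 e4 meet_scale /meet /line mono.
    by rewrite scalerA.
split => //; split => //.
split; first by exists M.
move=> i; have [h1 h2 _ _] := @loc_core X Y P (i - 2) good hnc hS.
rewrite (_ : i - 2 + 0%:Z = i - 2) in h1 h2; last by lia.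
rewrite (_ : i - 2 + 1%:Z = i - 1) in h1 h2; last by lia.
rewrite (_ : i - 2 + 2%:Z = i) in h1 h2; last by lia.
rewrite (_ : i - 2 + 3%:Z = i + 1) in h1 h2; last by lia.
rewrite (_ : i - 2 + 4%:Z = i + 2) in h1 h2; last by lia.
split.
- change (chi5 X (T3 P (i - 2)) (T3 P (i - 1)) (T3 P i) (T3 P (i + 1)) (T3 P (i + 2))).
  by apply/chi5_bx.
- change (chi5 Y (T3 P (i + 2)) (T3 P (i + 1)) (T3 P i) (T3 P (i - 1)) (T3 P (i - 2))).
  by apply/chi5_bx.
Qed.
End GL.

Theorem mainTheorem10 (R : realType) (n : nat) : (2 <= n)%N ->
  [/\ T3_preserves n (Iint R) (Jint R),
      T3_preserves n (Kint R) (Jint R),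
      T3_preserves n (Jint R) (Iint R) &
      T3_preserves n (Jint R) (Kint R)].
Proof.
move=> _; split; apply: preserves;
  [exact: goodIJ | exact: goodKJ | exact: goodJI | exact: goodJK].
Qed.
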